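(* Let $n\ge1$, let $\preceq$ be an admissible order on $L([0,1])$, let $F\colon L([0,1])\times L([0,1])\to L([0,1])$, $G\colon L([0,1])^n\to L([0,1])$ be functions and let $m\colon 2^N\to L([0,1])$ be an IV fuzzy measure with respect to $\preceq$. Then: (i) if $F$ is non-decreasing in the second variable, the triplet $(m,F,\vee)$ satisfies Condition (WDS) for any $m$; (ii) if $G=f\circ \mathrm{Proj}_1$ or $G=f\circ\vee$ for some function $f\colon L([0,1])\to L([0,1])$, then the triplet $(m,\wedge,G)$ satisfies Condition (WDS) for any $m$; (iii) the triplet $(m,\wedge,\vee)$ satisfies Condition (WDS) for any $m$.
   Context: $N=\{1,\dots,n\}$. $L([0,1])=\{[a,b]: 0\le a\le b\le 1\}$, $\mathbf 0=[0,0]$, $\mathbf 1=[1,1]$. $[a,b]\le_{spo}[c,d]$ iff $a\le c$ and $b\le d$. An admissible order $\preceq$ on $L([0,1])$ is a total order such that $X\le_{spo}Y$ implies $X\preceq Y$. $\vee$ and $\wedge$ denote maximum and minimum with respect to $\preceq$ (as $n$-ary or binary functions on $L([0,1])$). An IV fuzzy measure w.r.t. $\preceq$ is $m\colon 2^N\to L([0,1])$ with $m(\emptyset)=\mathbf 0$, $m(N)=\mathbf 1$, $m(A)\preceq m(B)$ for $A\subseteq B$. $\mathrm{Proj}_1(X_1,\dots,X_n)=X_1$. Monotonicity is w.r.t. $\preceq$. For a permutation $\sigma$ of $N$, $E_{\sigma(i)}=\{\sigma(i),\dots,\sigma(n)\}$. A triplet $(m,F,G)$ satisfies Condition (WDS)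 if for all $X_1,\dots,X_n\in L([0,1])$ and all permutations $\sigma_1,\sigma_2$ of $N$ with $X_{\sigma_j(1)}\preceq\dots\preceq X_{\sigma_j(n)}$ ($j=1,2$) one has $G\big(F(X_{\sigma_1(1)},m(E_{\sigma_1(1)})),\dots,F(X_{\sigma_1(n)},m(E_{\sigma_1(n)}))\big)=G\big(F(X_{\sigma_2(1)},m(E_{\sigma_2(1)})),\dots,F(X_{\sigma_2(n)},m(E_{\sigma_2(n)}))\big)$. *)

(* Defs.v *)
From HB Require Import structures.
From mathcomp Require Import all_boot all_order all_algebra all_fingroup.
From mathcomp Require Import reals.
Set Implicit Arguments. Unset Strict Implicit. Unset Printing Implicit Defensive.
Import Order.TTheory GRing.Theory Num.Theory.
Local Open Scope ring_scope.

Record IV (R : realType) := mkIV {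
  lo : R; hi : R;
  ivP : (0 <= lo) && (lo <= hi) && (hi <= 1) }.

Lemma iv0P (R : realType) : (0 <= (0:R)) && (0 <= (0:R)) && ((0:R) <= 1).
Proof. by rewrite lexx ler01. Qed.
Lemma iv1P (R : realType) : (0 <= (1:R)) && (1 <= (1:R)) && ((1:R) <= 1).
Proof. by rewrite lexx ler01. Qed.

Definition iv0 (R : realType) : IV R := mkIV (iv0P R).
Definition iv1 (R : realType) : IV R := mkIV (iv1P R).

Definition le_spo (R : realType) (X Y : IV R) : Prop :=
  lo X <= lo Y /\ hi X <= hi Y.

Definition admissible (R : realType) (le : IV R -> IV R -> bool) : Prop :=
  [/\ (forall X, le X X),
      (forall X Y, le X Y -> le Y X -> X = Y),
      (forall X Y Z, le X Y -> le Y Z -> le X Z),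
      (forall X Y, le X Y || le Y X) &
      (forall X Y, le_spo X Y -> le X Y)].

Definition ivmax (R : realType) (le : IV R -> IV R -> bool) (X Y : IV R) : IV R :=
  if le X Y then Y else X.
Definition ivmin (R : realType) (le : IV R -> IV R -> bool) (X Y : IV R) : IV R :=
  if le X Y then X else Y.

(* n-ary maximum w.r.t. le (iv0 is the least element of any admissible order,
   so for n >= 1 this is the maximum of X_1, ..., X_n) *)
Definition ivmaxn (R : realType) (le : IV R -> IV R -> bool) (n : nat)
  (X : 'I_n -> IV R) : IV R :=
  foldr (ivmax le) (iv0 R) [seq X i | i <- enum 'I_n].

(* Proj_1 (X_1,...,X_n) = X_1 (index 0 in 'I_n); default iv0 when n = 0 *)
Definition Proj1 (R : realType) (n : nat) (X : 'I_n -> IV R) : IV R :=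
  match [pick i : 'I_n | val i == 0%N] with Some i => X i | None => iv0 R end.

Definition iv_fuzzy_measure (R : realType) (le : IV R -> IV R -> bool) (n : nat)
  (m : {set 'I_n} -> IV R) : Prop :=
  [/\ m set0 = iv0 R, m setT = iv1 R &
      (forall A B : {set 'I_n}, A \subset B -> le (m A) (m B))].

Definition Eset (n : nat) (s : {perm 'I_n}) (i : 'I_n) : {set 'I_n} :=
  [set s j | j : 'I_n & (i <= j)%N].

Definition sorted_by (R : realType) (le : IV R -> IV R -> bool) (n : nat)
  (X : 'I_n -> IV R) (s : {perm 'I_n}) : Prop :=
  forall i j : 'I_n, (i <= j)%N -> le (X (s i)) (X (s j)).

Definition WDS (R : realType) (le : IV R -> IV R -> bool) (n : nat)
  (m : {set 'I_n} -> IV R) (F : IV R -> IV R -> IV R)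
  (G : ('I_n -> IV R) -> IV R) : Prop :=
  forall (X : 'I_n -> IV R) (s1 s2 : {perm 'I_n}),
    sorted_by le X s1 -> sorted_by le X s2 ->
    G (fun i => F (X (s1 i)) (m (Eset s1 i))) =
    G (fun i => F (X (s2 i)) (m (Eset s2 i))).

(* Main.v *)
Require Import Defs.
From HB Require Import structures.
From mathcomp Require Import all_boot all_order all_algebra all_fingroup.
From mathcomp Require Import reals.
Set Implicit Arguments. Unset Strict Implicit. Unset Printing Implicit Defensive.
Import Order.TTheory GRing.Theory Num.Theory.

Section S.
Variables (R : realType) (le : IV R -> IV R -> bool) (hle : admissible le).

Lemma lrefl X : le X X. Proof. by case: hle => h _ _ _ _; apply: h. Qed.
Lemma lanti X Y : le X Y -> le Y X -> X = Y. Proof. by case: hle => _ h _ _ _; apply: h. Qed.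
Lemma ltrans X Y Z : le X Y -> le Y Z -> le X Z. Proof. by case: hle => _ _ h _ _; apply: h. Qed.
Lemma ltot X Y : le X Y || le Y X. Proof. by case: hle => _ _ _ h _; apply: h. Qed.
Lemma lspo X Y : le_spo X Y -> le X Y. Proof. by case: hle => _ _ _ _ h; apply: h. Qed.

Lemma le0 X : le (iv0 R) X.
Proof.
apply: lspo; case: X => a b h; have /andP[/andP[h1 h2] h3] := h; split => //=.
exact: (Order.POrderTheory.le_trans h1 h2).
Qed.

Lemma le1 X : le X (iv1 R).
Proof.
apply: lspo; case: X => a b h; have /andP[/andP[h1 h2] h3] := h; split => //=.
exact: (Order.POrderTheory.le_trans h2 h3).
Qed.

Lemma maxn_ub n (X : 'I_n -> IV R) i : le (X i) (ivmaxn le X).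
Proof.
rewrite /ivmaxn; have : i \in enum 'I_n by rewrite mem_enum.
elim: (enum 'I_n) => //= j s IH; rewrite in_cons => /orP[/eqP<-|/IH h].
  rewrite /ivmax; case: ifP => // _; exact: lrefl.
rewrite /ivmax; case: ifP => // hj.
apply: ltrans h _; have := ltot (X j) (foldr (ivmax le) (iv0 R) [seq X i | i <- s]).
by rewrite hj.
Qed.

Lemma maxn_lub n (X : 'I_n -> IV R) Y : (forall i, le (X i) Y) -> le (ivmaxn le X) Y.
Proof.
move=> h; rewrite /ivmaxn; elim: (enum 'I_n) => /= [|j s IH]; first exact: le0.
by rewrite /ivmax; case: ifP.
Qed.

Lemma aux n (F : IV R -> IV R -> IV R)
  (hF : forall X Y Z, le Y Z -> le (F X Y) (F X Z))
  (m : {set 'I_n} -> IV R)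
  (hm : forall A B : {set 'I_n}, A \subset B -> le (m A) (m B))
  X s (hs : sorted_by le X s) :
  ivmaxn le (fun i => F (X (s i)) (m (Eset s i))) =
  ivmaxn le (fun k => F (X k) (m [set j | le (X k) (X j)])).
Proof.
apply: lanti.
  apply: maxn_lub => i; apply: ltrans (maxn_ub _ (s i)).
  apply: hF; apply: hm; apply/subsetP => x /imsetP[j]; rewrite inE => hij ->.
  rewrite inE; exact: hs.
apply: maxn_lub => k.
have P0 : le (X k) (X (s ((s^-1)%g k))) by rewrite permKV; exact: lrefl.
case: (arg_minnP (P := fun i => le (X k) (X (s i))) (fun i : 'I_n => val i) P0)
  => i' Pi' mini'.
have hEi : Eset s i' = [set j | le (X k) (X j)].
  apply/setP => x; rewrite inE; apply/imsetP/idP.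
    by case=> j; rewrite inE => hj ->; exact: ltrans Pi' (hs _ _ hj).
  move=> hx; exists ((s^-1)%g x); last by rewrite permKV.
  by rewrite inE; apply: mini'; rewrite /= permKV.
have hXi : X (s i') = X k.
  apply: lanti => //; rewrite -[in X in le _ X](permKV s k); apply: hs; exact: mini'.
apply: ltrans (maxn_ub _ i'); rewrite /= hEi hXi; exact: lrefl.
Qed.

Lemma min_mono X Y Z : le Y Z -> le (ivmin le X Y) (ivmin le X Z).
Proof.
move=> hYZ; rewrite /ivmin; case: ifP => hXY; case: ifP => hXZ //.
- exact: lrefl.
- by rewrite (ltrans hXY hYZ) in hXZ.
- by have := ltot X Y; rewrite hXY.
Qed.

Lemma part3 n (m : {set 'I_n} -> IV R) : iv_fuzzy_measure le m ->
     WDS le m (ivmin le) (@ivmaxn R le n).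
Proof.
move=> [_ _ hm] X s1 s2 h1 h2.
by rewrite (aux min_mono hm h1) (aux min_mono hm h2).
Qed.

End S.

Theorem corollary1 (R : realType) (n : nat) (hn : (1 <= n)%N)
  (le : IV R -> IV R -> bool) (hle : admissible le) :
  (* (i) *)
  (forall F : IV R -> IV R -> IV R,
     (forall X Y Z, le Y Z -> le (F X Y) (F X Z)) ->
     forall m : {set 'I_n} -> IV R, iv_fuzzy_measure le m ->
       WDS le m F (@ivmaxn R le n)) /\
  (* (ii) *)
  (forall G : ('I_n -> IV R) -> IV R,
     (exists f : IV R -> IV R,
        G = (fun X => f (Proj1 X)) \/ G = (fun X => f (ivmaxn le X))) ->
     forall m : {set 'I_n} -> IV R, iv_fuzzy_measure le m ->
       WDS le m (ivmin le) G) /\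
  (* (iii) *)
  (forall m : {set 'I_n} -> IV R, iv_fuzzy_measure le m ->
     WDS le m (ivmin le) (@ivmaxn R le n)).
Proof.
split; [|split]; last exact: part3.
  move=> F hF m [_ _ hm] X s1 s2 h1 h2.
  by rewrite (aux hle hF hm h1) (aux hle hF hm h2).
move=> G [f [->|->]] m hm X s1 s2 h1 h2; last first.
  by congr f; exact: part3.
rewrite /Proj1; case: pickP => [i /eqP hi|_] //=; congr f.
have hE : forall s : {perm 'I_n}, Eset s i = setT.
  move=> s; apply/setP => x; rewrite inE; apply/imsetP; exists ((s^-1)%g x).
    by rewrite inE hi.
  by rewrite permKV.
case: hm => _ h1m _; rewrite !hE h1m /ivmin !le1 //.
apply: (lanti hle).
  rewrite -[in X in le _ X](permKV s1 (s2 i)); apply: h1; by rewrite hi.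
rewrite -[in X in le _ X](permKV s2 (s1 i)); apply: h2; by rewrite hi.
Qed.
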